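(* Let $G$ be a discrete probability measure on $\Theta$ whose support is a finite set $\{\theta^*_1,\ldots,\theta^*_k\}\subset\Theta$ with $k\ge 1$. For every $n\ge 1$ let $G^{(n)}$ be the level $n$ SBA approximation of $G$. Then $G^{(n)}=G$ for every $n\ge k$.
   Context: $\Theta\subseteq\mathbb{R}$ is either $\mathbb{R}$, a closed half-line, or a compact interval with nonempty interior, with its Borel $\sigma$-field. A probability measure $G$ on $\Theta$ is identified with its distribution function $G(t)=G(\Theta\cap(-\infty,t])$. For $a_1\le a_2$ (endpoints allowed to be $\inf\Theta$ or $\sup\Theta$), the $G$-barycenter of $(a_1,a_2]$ is $b_G(a_1,a_2]=\frac{\int_{(a_1,a_2]}\theta\,dG(\theta)}{G(a_2)-G(a_1)}$ if $G(a_2)>G(a_1)$, and $b_G(a_1,a_2]=a_1$ if $G(a_2)=G(a_1)$. For $G$ with finite first moment, its sequential barycenter array (SBA) $\{\mu_{j,l}: j\ge1,\ 1\le l\le 2^j-1\}$ is defined by $\mu_{1,1}=\int_\Theta\theta\,dG(\theta)$ and, for $j\ge 2$: $\mu_{j,2l}=\mu_{j-1,l}$ for $1\le l\le 2^{j-1}-1$, and $\mu_{j,2l-1}=b_G(\mu_{j-1,l-1},\mu_{j-1,l}]$ for $1\le l\le 2^{j-1}$, with the convention $\mu_{j,0}=\inf\Theta$, $\mu_{j,2^j}=\sup\Theta$ for all $j$. The level $n$ intervals are $\Theta_{n,1}=[\mu_{n,0},\mu_{n,1}]$ if $\mu_{n,0}>-\infty$ and $(\mu_{n,0},\mu_{n,1}]$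 otherwise; $\Theta_{n,l}=(\mu_{n,l-1},\mu_{n,l}]$ for $2\le l\le 2^n-1$; $\Theta_{n,2^n}=(\mu_{n,2^n-1},\mu_{n,2^n}]$ if $\mu_{n,2^n}<\infty$ and $(\mu_{n,2^n-1},\infty)$ otherwise. The level $n$ SBA approximation of $G$ is the discrete measure $G^{(n)}=\sum_{l=1}^{2^n}G(\Theta_{n,l})\,\delta_{\mu_{n+1,2l-1}}$. *)

(* Defs.v *)
From mathcomp Require Import all_boot all_order all_algebra.
From mathcomp Require Import all_classical all_reals.
From mathcomp Require Import ereal.
Set Implicit Arguments. Unset Strict Implicit. Unset Printing Implicit Defensive.
Import Order.TTheory GRing.Theory Num.Theory.
Local Open Scope classical_set_scope.
Local Open Scope ring_scope.

Definition is_Theta (R : realType) (Th : set R) : Prop :=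
  Th = setT \/
  (exists a : R, Th = `[a, +oo[%classic) \/
  (exists a : R, Th = `]-oo, a]%classic) \/
  (exists a b : R, a < b /\ Th = `[a, b]%classic).

Definition infTheta (R : realType) (Th : set R) : \bar R := ereal_inf (EFin @` Th).
Definition supTheta (R : realType) (Th : set R) : \bar R := ereal_sup (EFin @` Th).

Definition Gmass (R : realType) (k : nat) (th w : 'I_k -> R) (S : set R) : R :=
  \sum_(i < k) w i * (th i \in S)%:R.

Definition Gint (R : realType) (k : nat) (th w : 'I_k -> R) (S : set R) : R :=
  \sum_(i < k) w i * th i * (th i \in S)%:R.

(* G-barycenter of the cell S whose left endpoint is a1 *)
Definition bary (R : realType) (k : nat) (th w : 'I_k -> R) (S : set R) (a1 : \bar R)
  : \bar R :=
  if 0 < Gmass th w S then (Gint th w S / Gmass th w S)%:E else a1.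

(* Level n cell Theta_{n,l}, 1 <= l <= 2^n, given the level-n points m 0 .. m (2^n). *)
Definition cell (R : realType) (m : nat -> \bar R) (n l : nat) : set R :=
  if l == 1%N then
    (if m 0%N != -oo%E then [set x | (m 0%N <= x%:E <= m 1%N)%E]
     else [set x | (x%:E <= m 1%N)%E])
  else if l == (2 ^ n)%N then
    (if m (2 ^ n)%N != +oo%E then [set x | (m l.-1 < x%:E <= m l)%E]
     else [set x | (m l.-1 < x%:E)%E])
  else [set x | (m l.-1 < x%:E <= m l)%E].

Fixpoint sba (R : realType) (Th : set R) (k : nat) (th w : 'I_k -> R) (j l : nat)
  : \bar R :=
  match j with
  | 0%N => if l == 0%N then infTheta Th else supTheta Th
  | j'.+1 =>
      if l == 0%N then infTheta Th
      else if (2 ^ j <= l)%N then supTheta Th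
      else match j' with
           | 0%N => (\sum_(i < k) w i * th i)%:E
           | _ => if odd l
                  then bary th w (cell (sba Th th w j') j' (l.+1)./2)
                            (sba Th th w j' l./2)
                  else sba Th th w j' l./2
           end
  end.

(* delta_e (A) for an extended real e (0 if e is infinite) *)
Definition atom (R : realType) (e : \bar R) (A : set R) : R :=
  match e with EFin r => (r \in A)%:R | _ => 0 end.

Definition SBAapprox (R : realType) (Th : set R) (k : nat) (th w : 'I_k -> R)
  (n : nat) (A : set R) : R :=
  \sum_(1 <= l < (2 ^ n).+1)
     Gmass th w (cell (sba Th th w n) n l) * atom (sba Th th w n.+1 (2 * l - 1)) A.

(* Main.v *)
Require Import Defs.
From mathcomp Require Import all_boot all_order all_algebra.
From mathcomp Require Import all_classical all_reals.
From mathcomp Require Import ereal.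
From mathcomp Require Import zify lra.
Set Implicit Arguments. Unset Strict Implicit. Unset Printing Implicit Defensive.
Import Order.TTheory GRing.Theory Num.Theory.
Local Open Scope classical_set_scope.
Local Open Scope ring_scope.

Definition inS (R : realType) (Th : set R) (k : nat) (th w : 'I_k -> R) (n l : nat) (i : 'I_k) : bool :=
  ((l == 1%N) || (sba Th th w n l.-1 < (th i)%:E)%E) && ((th i)%:E <= sba Th th w n l)%E.

Definition Ms (R : realType) (Th : set R) (k : nat) (th w : 'I_k -> R) (n l : nat) : R :=
  \sum_(i < k) w i * (inS Th th w n l i)%:R.
Definition Is (R : realType) (Th : set R) (k : nat) (th w : 'I_k -> R) (n l : nat) : R :=
  \sum_(i < k) w i * th i * (inS Th th w n l i)%:R.

Lemma sba0E (R : realType) (Th : set R) (k : nat) (th w : 'I_k -> R) l :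
  sba Th th w 0 l = if l == 0%N then infTheta Th else supTheta Th.
Proof. by []. Qed.
Lemma sba1E (R : realType) (Th : set R) (k : nat) (th w : 'I_k -> R) l :
  sba Th th w 1 l = if l == 0%N then infTheta Th else if (2 ^ 1 <= l)%N then supTheta Th
     else (\sum_(i < k) w i * th i)%:E.
Proof. by []. Qed.
Lemma sbaSSE (R : realType) (Th : set R) (k : nat) (th w : 'I_k -> R) n l :
  sba Th th w n.+2 l = if l == 0%N then infTheta Th else if (2 ^ n.+2 <= l)%N then supTheta Th
     else if odd l then bary th w (cell (sba Th th w n.+1) n.+1 (l.+1)./2) (sba Th th w n.+1 l./2)
     else sba Th th w n.+1 l./2.
Proof. by []. Qed.

Lemma sba_0 (R : realType) (Th : set R) (k : nat) (th w : 'I_k -> R) n :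
  sba Th th w n 0 = infTheta Th.
Proof. by case: n => [|[|n]]. Qed.

Lemma sba_top (R : realType) (Th : set R) (k : nat) (th w : 'I_k -> R) n :
  sba Th th w n (2 ^ n) = supTheta Th.
Proof.
case: n => [|[|n]]; first by [].
  by [].
by rewrite sbaSSE expn_eq0 /= leqnn.
Qed.

Lemma sba_even (R : realType) (Th : set R) (k : nat) (th w : 'I_k -> R) n l :
  (l <= 2 ^ n)%N -> sba Th th w n.+1 (2 * l) = sba Th th w n l.
Proof.
case: n => [|n] hl.
  rewrite sba1E sba0E; case: l hl => [|[|l]] //= hl.
rewrite sbaSSE.
have [->|l0] := eqVneq l 0%N; first by rewrite muln0 sba_0.
have -> : (2 * l == 0)%N = false by lia.
case: ifP => h1.
  have -> : l = (2 ^ n.+1)%N by rewrite !expnS in h1 hl *; lia.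
  by rewrite sba_top.
by rewrite oddM /= (_ : (2 * l)./2 = l) //; lia.
Qed.

Lemma infT_le (R : realType) (Th : set R) (x : R) : Th x -> (infTheta Th <= x%:E)%E.
Proof. by move=> hx; apply: ereal_inf_lbound; exists x. Qed.
Lemma supT_ge (R : realType) (Th : set R) (x : R) : Th x -> (x%:E <= supTheta Th)%E.
Proof. by move=> hx; apply: ereal_sup_ubound; exists x. Qed.

Lemma cellE (R : realType) (Th : set R) (k : nat) (th w : 'I_k -> R) n l i :
  Th (th i) -> (0 < n)%N -> (1 <= l <= 2 ^ n)%N ->
  (th i \in cell (sba Th th w n) n l) = inS Th th w n l i.
Proof.
move=> hT n0 hl; have hi := infT_le hT; have hs := supT_ge hT.
rewrite /cell /inS.
case: ifP => [/eqP l1|l1].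
  subst l; rewrite /= sba_0.
  by case: ifP => _; apply/idP/idP; rewrite in_setE /= ?hi.
case: ifP => [/eqP l2|l2]; last by apply/idP/idP; rewrite in_setE /= ?l1.
case: ifP => _; apply/idP/idP; rewrite in_setE /= //.
  by move=> ->; rewrite l2 sba_top.
by case/andP.
Qed.

Lemma sba_odd (R : realType) (Th : set R) (k : nat) (th w : 'I_k -> R) n l :
  (forall i, Th (th i)) -> \sum_(i < k) w i = 1 -> (1 <= l <= 2 ^ n)%N ->
  sba Th th w n.+1 (2 * l - 1) =
  if 0 < Ms Th th w n l then (Is Th th w n l / Ms Th th w n l)%:E else sba Th th w n l.-1.
Proof.
move=> hT hw1 hl; case: n hl => [|n] hl.
  have -> : l = 1%N by rewrite expn0 in hl; lia.
  have hin : forall i, inS Th th w 0%N 1%N i by move=> i; rewrite /inS /= supT_ge.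
  have -> : Ms Th th w 0%N 1%N = 1.
    by rewrite /Ms -[RHS]hw1; apply: eq_bigr => i _; rewrite hin mulr1.
  have -> : Is Th th w 0%N 1%N = \sum_(i < k) w i * th i.
    by apply: eq_bigr => i _; rewrite hin /= mulr1n mulr1.
  by rewrite ltr01 divr1.
rewrite sbaSSE.
have -> : (2 * l - 1 == 0)%N = false by lia.
have -> : (2 ^ n.+2 <= 2 * l - 1)%N = false by rewrite !expnS in hl *; lia.
have -> : odd (2 * l - 1) by rewrite oddB ?oddM //; lia.
rewrite (_ : (2 * l - 1).+1./2 = l); last by lia.
rewrite (_ : (2 * l - 1)./2 = l.-1); last by lia.
rewrite /bary.
have hM : Gmass th w (cell (sba Th th w n.+1) n.+1 l) = Ms Th th w n.+1 l.
  by apply: eq_bigr => i _; rewrite cellE.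
have hI : Gint th w (cell (sba Th th w n.+1) n.+1 l) = Is Th th w n.+1 l.
  by apply: eq_bigr => i _; rewrite cellE.
by rewrite hM hI.
Qed.
Lemma sum_dev (R : realFieldType) k (th w : 'I_k -> R) (P : 'I_k -> bool) (b : R) :
  \sum_(i < k) w i * (P i)%:R * (th i - b) =
  \sum_(i < k) w i * th i * (P i)%:R - b * \sum_(i < k) w i * (P i)%:R.
Proof.
rewrite mulr_sumr -sumrB; apply: eq_bigr => i _; lra.
Qed.

Lemma exP_of_pos (R : realFieldType) k (w : 'I_k -> R) (P : 'I_k -> bool) :
  0 < \sum_(i < k) w i * (P i)%:R -> exists i, P i.
Proof.
move=> hM; have [/existsP [i Pi]|/existsP hno] := boolP [exists i, P i]; first by exists i.
exfalso; move: hM; rewrite big1 ?ltxx // => i _.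
have -> : P i = false by apply/negP => Pi; apply: hno; exists i.
by rewrite mulr0.
Qed.

Lemma split_lo (R : realFieldType) k (th w : 'I_k -> R) (P : 'I_k -> bool) (lo : R) :
  (forall i, 0 < w i) -> 0 < \sum_(i < k) w i * (P i)%:R ->
  (forall i, P i -> lo <= th i) ->
  lo <= (\sum_(i < k) w i * th i * (P i)%:R) / \sum_(i < k) w i * (P i)%:R.
Proof.
move=> hw hM hlo; rewrite ler_pdivlMr // mulr_sumr; apply: ler_sum => i _.
have := hw i; case: (boolP (P i)) => Pi /= hwi; last lra.
have := hlo i Pi; nra.
Qed.

Lemma split_hi (R : realFieldType) k (th w : 'I_k -> R) (P : 'I_k -> bool) (hi : R) :
  (forall i, 0 < w i) -> 0 < \sum_(i < k) w i * (P i)%:R ->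
  (forall i, P i -> th i <= hi) ->
  (\sum_(i < k) w i * th i * (P i)%:R) / \sum_(i < k) w i * (P i)%:R <= hi.
Proof.
move=> hw hM hhi; rewrite ler_pdivrMr // mulr_sumr; apply: ler_sum => i _.
have := hw i; case: (boolP (P i)) => Pi /= hwi; last lra.
have := hhi i Pi; nra.
Qed.

Lemma split_ex_le (R : realFieldType) k (th w : 'I_k -> R) (P : 'I_k -> bool) :
  (forall i, 0 < w i) -> 0 < \sum_(i < k) w i * (P i)%:R ->
  exists2 i, P i & th i <= (\sum_(i < k) w i * th i * (P i)%:R) / \sum_(i < k) w i * (P i)%:R.
Proof.
move=> hw hM.
set M := \sum_(i < k) w i * (P i)%:R.
set I := \sum_(i < k) w i * th i * (P i)%:R.
set b := I / M.
have [/existsP [i /andP [Pi hi]]|/existsP hno] := boolP [exists i, P i && (th i <= b)].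
  by exists i.
exfalso.
have hP : forall i, P i -> b < th i.
  move=> i Pi; rewrite ltNge; apply/negP => h; apply: hno; exists i; by rewrite Pi h.
have [i0 Pi0] := exP_of_pos hM.
have hs : \sum_(i < k) w i * (P i)%:R * (th i - b) = 0.
  rewrite sum_dev -/I -/M /b divfK ?subrr //; exact: lt0r_neq0.
have hnn : forall i, xpredT i -> 0 <= w i * (P i)%:R * (th i - b).
  move=> i _; have := hw i; case: (boolP (P i)) => Pi /= hwi; last by rewrite mulr0 mul0r.
  by rewrite mulr1; apply: mulr_ge0; [lra| have := hP i Pi; lra].
have := @psumr_eq0P _ _ xpredT (fun i => w i * (P i)%:R * (th i - b)) hnn hs i0 isT.
rewrite Pi0 /= mulr1; have := hP i0 Pi0; have := hw i0; move=> h1 h2 h3.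
have : 0 < w i0 * (th i0 - b) by apply: mulr_gt0 => //; lra.
by rewrite h3 ltxx.
Qed.

Lemma split_ex_gt (R : realFieldType) k (th w : 'I_k -> R) (P : 'I_k -> bool) :
  (forall i, 0 < w i) -> injective th -> (1 < #|[set i | P i]%SET|)%N ->
  exists2 i, P i & (\sum_(i < k) w i * th i * (P i)%:R) / \sum_(i < k) w i * (P i)%:R < th i.
Proof.
move=> hw hinj /card_gt1P [x [y [hx hy hxy]]].
rewrite !inE in hx hy.
have hM : 0 < \sum_(i < k) w i * (P i)%:R.
  rewrite (bigD1 x) //= hx mulr1 ltr_pwDl //.
  apply: sumr_ge0 => i _; apply: mulr_ge0; [exact: ltW | exact: ler0n].
set M := \sum_(i < k) w i * (P i)%:R.
set I := \sum_(i < k) w i * th i * (P i)%:R.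
set b := I / M.
have [/existsP [i /andP [Pi hi]]|/existsP hno] := boolP [exists i, P i && (b < th i)].
  by exists i.
exfalso.
have hP : forall i, P i -> th i <= b.
  move=> i Pi; rewrite leNgt; apply/negP => h; apply: hno; exists i; by rewrite Pi h.
have hs : \sum_(i < k) w i * (P i)%:R * (b - th i) = 0.
  have := sum_dev th w P b; rewrite -/I -/M /b divfK ?subrr; last exact: lt0r_neq0.
  move=> h; rewrite -[RHS]oppr0 -[in RHS]h -sumrN; apply: eq_bigr => i _; lra.
have hnn : forall i, xpredT i -> 0 <= w i * (P i)%:R * (b - th i).
  move=> i _; have := hw i; case: (boolP (P i)) => Pi /= hwi; last by rewrite mulr0 mul0r.
  by rewrite mulr1; apply: mulr_ge0; [lra| have := hP i Pi; lra].
have hz := @psumr_eq0P _ _ xpredT (fun i => w i * (P i)%:R * (b - th i)) hnn hs.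
have ex : forall i, P i -> th i = b.
  move=> i Pi; have := hz i isT; rewrite Pi /= mulr1 => /eqP; rewrite mulf_eq0.
  case/orP => [/eqP h|]; first by have := hw i; lra.
  by rewrite subr_eq0 => /eqP.
by move/negP: hxy; apply; apply/eqP; apply: hinj; rewrite !ex.
Qed.

Lemma inS_bounds (R : realType) (Th : set R) (k : nat) (th w : 'I_k -> R) n l i :
  inS Th th w n l i -> Th (th i) ->
  (sba Th th w n l.-1 <= (th i)%:E)%E && ((th i)%:E <= sba Th th w n l)%E.
Proof.
rewrite /inS => /andP [/orP [/eqP ->|h] ->] hT; rewrite andbT.
  by rewrite sba_0; exact: (infT_le hT).
exact: ltW.
Qed.

Definition I1 (R : realType) (Th : set R) (k : nat) (th w : 'I_k -> R) n :=
  forall l, (1 <= l <= 2 ^ n)%N -> (sba Th th w n l.-1 <= sba Th th w n l)%E.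

Lemma b_bounds (R : realType) (Th : set R) (k : nat) (th w : 'I_k -> R) n l :
  (forall i, Th (th i)) -> (forall i, 0 < w i) -> \sum_(i < k) w i = 1 ->
  I1 Th th w n -> (1 <= l <= 2 ^ n)%N ->
  (sba Th th w n l.-1 <= sba Th th w n.+1 (2 * l - 1))%E /\
  (sba Th th w n.+1 (2 * l - 1) <= sba Th th w n l)%E.
Proof.
move=> hT hw hw1 h1 hl; rewrite sba_odd //.
case: ifP => hM; last by split; [exact: lexx | exact: h1].
have [i0 Pi0] := exP_of_pos hM.
have hb := fun i (h : inS Th th w n l i) => inS_bounds h (hT i).
split.
  case E: (sba Th th w n l.-1) => [r| |].
  - rewrite lee_fin; apply: split_lo => // i /hb; rewrite E lee_fin.
    by case/andP.
  - by have := hb i0 Pi0; rewrite E leye_eq.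
  - exact: leNye.
case E: (sba Th th w n l) => [r| |].
- rewrite lee_fin; apply: split_hi => // i /hb; rewrite E lee_fin.
  by case/andP.
- exact: leey.
- by have := hb i0 Pi0; rewrite E leeNy_eq andbF.
Qed.

Lemma child_odd (R : realType) (Th : set R) (k : nat) (th w : 'I_k -> R) n l i :
  (forall i, Th (th i)) -> (forall i, 0 < w i) -> \sum_(i < k) w i = 1 ->
  I1 Th th w n -> (1 <= l <= 2 ^ n)%N ->
  inS Th th w n.+1 (2 * l - 1) i =
  inS Th th w n l i && ((th i)%:E <= sba Th th w n.+1 (2 * l - 1))%E.
Proof.
move=> hT hw hw1 h1 hl; have [hlo hhi] := b_bounds hT hw hw1 h1 hl.
rewrite /inS.
have -> : (2 * l - 1 == 1)%N = (l == 1)%N by apply/eqP/eqP; lia.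
have -> : (2 * l - 1).-1 = (2 * l.-1)%N by lia.
rewrite sba_even; last by lia.
case hb: ((th i)%:E <= sba Th th w n.+1 (2 * l - 1))%E; rewrite ?andbF ?andbT //.
by rewrite (le_trans hb hhi) andbT.
Qed.

Lemma child_even (R : realType) (Th : set R) (k : nat) (th w : 'I_k -> R) n l i :
  (forall i, Th (th i)) -> (forall i, 0 < w i) -> \sum_(i < k) w i = 1 ->
  I1 Th th w n -> (1 <= l <= 2 ^ n)%N ->
  inS Th th w n.+1 (2 * l) i =
  inS Th th w n l i && (sba Th th w n.+1 (2 * l - 1) < (th i)%:E)%E.
Proof.
move=> hT hw hw1 h1 hl; have [hlo hhi] := b_bounds hT hw hw1 h1 hl.
rewrite /inS.
have -> : (2 * l == 1)%N = false by lia.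
have -> : (2 * l).-1 = (2 * l - 1)%N by lia.
rewrite sba_even; last by lia.
case hb: (sba Th th w n.+1 (2 * l - 1) < (th i)%:E)%E; rewrite ?andbF ?andbT //=.
by rewrite (le_lt_trans hlo hb) orbT.
Qed.

Lemma card_le_sub k (P Q : 'I_k -> bool) :
  (forall i, Q i -> P i) -> (#|[set i | Q i]%SET| <= #|[set i | P i]%SET|)%N.
Proof.
move=> h; apply: subset_leq_card; apply/fintype.subsetP => i; rewrite !inE; exact: h.
Qed.

Lemma card_lt_sub k (P Q : 'I_k -> bool) :
  (forall i, Q i -> P i) -> (exists2 j, P j & ~~ Q j) ->
  (#|[set i | Q i]%SET| < #|[set i | P i]%SET|)%N.
Proof.
move=> h [j Pj Qj]; apply: proper_card; apply/fintype.properP; split.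
  by apply/fintype.subsetP => i; rewrite !inE; exact: h.
by exists j; rewrite !inE.
Qed.

Lemma pos_of_card (R : realFieldType) k (w : 'I_k -> R) (P : 'I_k -> bool) :
  (forall i, 0 < w i) -> (0 < #|[set i | P i]%SET|)%N -> 0 < \sum_(i < k) w i * (P i)%:R.
Proof.
move=> hw /card_gt0P [x]; rewrite inE => hx.
rewrite (bigD1 x) //= hx mulr1 ltr_pwDl //.
apply: sumr_ge0 => i _; apply: mulr_ge0; [exact: ltW | exact: ler0n].
Qed.

Lemma split_range n (P : nat -> Prop) :
  (forall l, (1 <= l <= 2 ^ n)%N -> P (2 * l - 1)%N /\ P (2 * l)%N) ->
  forall l', (1 <= l' <= 2 ^ n.+1)%N -> P l'.
Proof.
move=> h l' hl'; have hr : (1 <= l'.+1 %/ 2 <= 2 ^ n)%N by rewrite expnS in hl'; lia.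
have [e|e] : l' = (2 * (l'.+1 %/ 2) - 1)%N \/ l' = (2 * (l'.+1 %/ 2))%N by lia.
  by rewrite e; case: (h _ hr).
by rewrite e; case: (h _ hr).
Qed.

Definition I2 (R : realType) (Th : set R) (k : nat) (th w : 'I_k -> R) n :=
  forall i, exists2 l, (1 <= l <= 2 ^ n)%N & inS Th th w n l i.
Definition I3 (R : realType) (Th : set R) (k : nat) (th w : 'I_k -> R) n :=
  forall l, (1 <= l <= 2 ^ n)%N -> (#|[set i | inS Th th w n l i]%SET| <= maxn 1 (k - n))%N.

Lemma sba_inv (R : realType) (Th : set R) (k : nat) (th w : 'I_k -> R) :
  (1 <= k)%N -> injective th ->
  (forall i, Th (th i)) -> (forall i, 0 < w i) -> \sum_(i < k) w i = 1 ->
  forall n, [/\ I1 Th th w n, I2 Th th w n & I3 Th th w n].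
Proof.
move=> hk hinj hT hw hw1; elim=> [|n [h1 h2 h3]].
  have l1 : forall l, (1 <= l <= 2 ^ 0)%N -> l = 1%N by move=> l; rewrite expn0; lia.
  split.
  - move=> l /l1 -> /=.
    have i0 : 'I_k by exists 0%N.
    exact: le_trans (infT_le (hT i0)) (supT_ge (hT i0)).
  - by move=> i; exists 1%N => //; rewrite /inS /= supT_ge.
  - move=> l _; apply: leq_trans (max_card _) _; rewrite card_ord; lia.
split.
- apply: split_range => l hl; have [hlo hhi] := b_bounds hT hw hw1 h1 hl.
  split.
    have -> : (2 * l - 1).-1 = (2 * l.-1)%N by lia.
    by rewrite sba_even //; lia.
  have -> : (2 * l).-1 = (2 * l - 1)%N by lia.
  by rewrite sba_even //; lia.
- move=> i; have [l hl hi] := h2 i.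
  case hb: ((th i)%:E <= sba Th th w n.+1 (2 * l - 1))%E.
    exists (2 * l - 1)%N; first by rewrite expnS; lia.
    by rewrite child_odd // hi hb.
  exists (2 * l)%N; first by rewrite expnS; lia.
  by rewrite child_even // hi ltNge hb.
- apply: split_range => l hl.
  set S := inS Th th w n l.
  have hS : (#|[set i | S i]%SET| <= maxn 1 (k - n))%N := h3 l hl.
  have [le1|gt1] := leqP #|[set i | S i]%SET| 1.
    split.
      apply: leq_trans (card_le_sub (P := S) _) _.
        by move=> i; rewrite child_odd // => /andP [].
      lia.
    apply: leq_trans (card_le_sub (P := S) _) _.
      by move=> i; rewrite child_even // => /andP [].
    lia.
  have hM := pos_of_card hw (ltnW gt1).
  have hb := sba_odd hT hw1 hl; rewrite -/(Ms _ _ _ _ _) hM in hb.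
  split.
    have [j Sj hj] := split_ex_gt hw hinj gt1.
    have : (#|[set i | inS Th th w n.+1 (2 * l - 1) i]%SET| < #|[set i | S i]%SET|)%N.
      apply: card_lt_sub.
        by move=> i; rewrite child_odd // => /andP [].
      exists j => //; rewrite child_odd // negb_and; apply/orP; right.
      by rewrite hb -ltNge lte_fin.
    lia.
  have [j Sj hj] := split_ex_le th hw (pos_of_card hw (ltnW gt1)).
  have : (#|[set i | inS Th th w n.+1 (2 * l) i]%SET| < #|[set i | S i]%SET|)%N.
    apply: card_lt_sub.
      by move=> i; rewrite child_even // => /andP [].
    exists j => //; rewrite child_even // negb_and; apply/orP; right.
    by rewrite hb -leNgt lee_fin.
  lia.
Qed.

Unset Implicit Arguments.

Lemma mono (R : realType) (Th : set R) (k : nat) (th w : 'I_k -> R) n :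
  I1 Th th w n -> forall a b, (a <= b <= 2 ^ n)%N -> (sba Th th w n a <= sba Th th w n b)%E.
Proof.
move=> h1 a b /andP [hab hb].
have : (a + (b - a) <= 2 ^ n)%N by lia.
have -> : b = (a + (b - a))%N by lia.
rewrite (_ : (a + (b - a) - a)%N = (b - a)%N); last by lia.
elim: (b - a)%N => [|d IH] hd; first by rewrite addn0.
apply: le_trans (IH _) _; first lia.
have := h1 (a + d.+1)%N; rewrite addnS /=; apply; lia.
Qed.

Theorem theorem1 (R : realType) (Th : set R) (k : nat) (th w : 'I_k -> R) :
  is_Theta Th ->
  (1 <= k)%N ->
  injective th ->
  (forall i, Th (th i)) ->
  (forall i, 0 < w i) ->
  \sum_(i < k) w i = 1 ->
  forall n : nat, (k <= n)%N ->
  forall A : set R, SBAapprox Th th w n A = Gmass th w A.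
Proof.
move=> _ hk hinj hT hw hw1 n hn A.
have [h1 h2 h3] := sba_inv hk hinj hT hw hw1 n.
have one : forall l, (1 <= l <= 2 ^ n)%N -> forall i j,
    inS Th th w n l i -> inS Th th w n l j -> i = j.
  move=> l hl i j hi hj.
  have := h3 l hl; have -> : maxn 1 (k - n) = 1%N by lia.
  by move/card_le1_eqP => H1; apply: (H1 j i); rewrite inE.
have uniq : forall i l l', (1 <= l <= 2 ^ n)%N -> (1 <= l' <= 2 ^ n)%N ->
    inS Th th w n l i -> inS Th th w n l' i -> l = l'.
  suff : forall i l l', (1 <= l <= 2 ^ n)%N -> (1 <= l' <= 2 ^ n)%N ->
      inS Th th w n l i -> inS Th th w n l' i -> ~ (l < l')%N.
    move=> H i l l' hl hl' hi hi'; apply/eqP; rewrite eqn_leq; apply/andP; split.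
      by rewrite leqNgt; apply/negP; apply: (H i l' l).
    by rewrite leqNgt; apply/negP; apply: (H i l l').
  move=> i l l' hl hl' /andP [_ hi] /andP [hi' _] hll.
  have hl1 : (l' == 1%N) = false by lia.
  rewrite hl1 /= in hi'.
  have hm : (sba Th th w n l <= sba Th th w n l'.-1)%E by apply: mono => //; lia.
  have := lt_le_trans hi' (le_trans hi hm); by rewrite ltxx.
rewrite /SBAapprox [RHS]/Gmass.
rewrite (eq_big_nat _ _ (F2 := fun l => \sum_(i < k) w i * (inS Th th w n l i)%:R * (th i \in A)%:R)); last first.
  move=> l hl; have hl' : (1 <= l <= 2 ^ n)%N by lia.
  have -> : Gmass th w (cell (sba Th th w n) n l) = Ms Th th w n l.
    by apply: eq_bigr => i _; rewrite cellE //; lia.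
  rewrite sba_odd //.
  have [/existsP [i0 hi0]|/existsP hno] := boolP [exists i, inS Th th w n l i].
    have hS : forall j, inS Th th w n l j = (j == i0).
      move=> j; apply/idP/eqP => [hj|->//]; exact: one hl' _ _ hj hi0.
    have hM : Ms Th th w n l = w i0.
      rewrite /Ms (bigD1 i0) //= hS eqxx mulr1 big1 ?addr0 // => j /negbTE hj.
      by rewrite hS hj mulr0.
    have hI : Is Th th w n l = w i0 * th i0.
      rewrite /Is (bigD1 i0) //= hS eqxx mulr1 big1 ?addr0 // => j /negbTE hj.
      by rewrite hS hj mulr0.
    rewrite hM hI hw /= mulrAC divff ?mul1r; last exact: lt0r_neq0.
    rewrite (bigD1 i0) //= hS eqxx mulr1 big1 ?addr0 // => j /negbTE hj.
    by rewrite hS hj mulr0 mul0r.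
  have hS : forall j, inS Th th w n l j = false.
    by move=> j; apply/negP => hj; apply: hno; exists j.
  have -> : Ms Th th w n l = 0 by rewrite /Ms big1 // => j _; rewrite hS mulr0.
  rewrite mul0r big1 // => j _; by rewrite hS mulr0 mul0r.
rewrite exchange_big /=; apply: eq_bigr => i _.
have [l0 hl0 hi0] := h2 i.
rewrite (eq_bigr (fun l => w i * (th i \in A)%:R * (inS Th th w n l i)%:R)); last first.
  by move=> l _; rewrite mulrAC.
rewrite -mulr_sumr (bigD1_seq l0) /=; first last.
- exact: iota_uniq.
- by rewrite mem_index_iota; lia.
rewrite hi0 big1_seq ?addr0 ?mulr1 // => l /andP [hne]; rewrite mem_index_iota => hl.
case hil: (inS Th th w n l i) => //.
exfalso; move/eqP: hne; apply; apply: (uniq i l l0) => //; lia.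
Qed.
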